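(* Let $s\in(0,2]$, $P$ a finite set of $n$ points in $(\mathbb{R}^d,\ell_s)$, $\varepsilon>0$, and let $q\in\mathbb{R}^d$ be a query point processed by the reverse nearest neighbor query procedure described in the context, with $y$ the point found at step 1. Let $P'=\bigcup_i P_i$ for $i$ ranging from $\lfloor\log_{1+\varepsilon}\frac{\mathrm{d}(q,y)}{1+\varepsilon}\rfloor+1$ to $\lceil\log_{1+\varepsilon}\frac{\mathrm{d}(q,y)}{\varepsilon}\rceil$, and let $S'$ be the set of points inserted into $S$ at step 2. Then $\mathrm{RNN}_P(q)\cap P'\subseteq S'$ with high probability.
   Context: $\mathrm{d}$ is the $\ell_s$ distance; $\mathrm{d}(x,P)=\min\{\mathrm{d}(x,p):p\in P\setminus\{x\}\}$; $N_Q(x,R)$ is the set of $p\in Q\setminus\{x\}$ with $\mathrm{d}(x,p)\le R$; $\varepsilon\text{-}\mathrm{NN}_P(x)=N_P(x,(1+\varepsilon)\mathrm{d}(x,P))$; $\mathrm{RNN}_P(x)$ is the set of $p\in P\setminus\{x\}$ with $\mathrm{d}(p,x)\le\mathrm{d}(p,P)$; $\varepsilon\text{-}\mathrm{RNN}_P(x)$ is the set of $p\in P\setminus\{x\}$ with $\mathrm{d}(p,x)\le(1+\varepsilon)\mathrm{d}(p,P)$. Preprocessing: compute $\mathrm{d}(p,P)$ for all $p\in P$; bucket $P_i=\{p\in P:(1+\varepsilon)^{i-1}\le\mathrm{d}(p,P)<(1+\varepsilon)^i\}$, $i\in\mathbb{Z}$; on each nonempty $P_i$ build a locality-sensitive hashing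 structure for exhaustive $(1+\varepsilon)^i$-PLEB on $P_i$ (the lifted structure $\mathcal{A}'(P_i,(1+\varepsilon)^i,\varepsilon)$ built from $s$-stable hash functions) with $\lceil c\ln n\rceil$ independent repetitions, $c=3/\ln\frac52$, so that for each query it returns $N_{P_i}(q,(1+\varepsilon)^i)$ with probability at least $1-1/n^2$; for each $y\in P$ store the array $P_y=\varepsilon\text{-}\mathrm{RNN}_P(y)\cup\{y\}$ sorted by $\mathrm{d}(\cdot,P)$; build an $\varepsilon$-approximate nearest neighbor structure on $P$ (Har-Peled's tree of LSH structures). Query: (1) find $y\in P$ with the $\varepsilon$-NN structure (with probability at least $1-1/n$, $y\in\varepsilon\text{-}\mathrm{NN}_P(q)$); (2) for each $i$ from $\lfloor\log_{1+\varepsilon}\frac{\mathrm{d}(q,y)}{1+\varepsilon}\rfloor+1$ to $\lceil\log_{1+\varepsilon}\frac{\mathrm{d}(q,y)}{\varepsilon}\rceil$ with $P_i\neq\emptyset$, run the exhaustive $(1+\varepsilon)^i$-PLEB query on $P_i$ and put the outputs into $S$; (3) add to $S$ the points $p\in P_y$ with $\mathrm{d}(p,P)\ge\mathrm{d}(q,y)/\varepsilon$; (4) remove from $S$ the points $p$ with $\mathrm{d}(p,q)>\mathrm{d}(p,P)$; return $S$. ''High probability'' means probability at least $1-1/n$. *)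

(* Defs.v *)
From HB Require Import structures.
From mathcomp Require Import all_boot all_order all_algebra.
From mathcomp Require Import all_classical all_reals all_analysis.
From mathcomp Require Import finmap.
Set Implicit Arguments. Unset Strict Implicit. Unset Printing Implicit Defensive.
Import Order.TTheory GRing.Theory Num.Theory.
Local Open Scope classical_set_scope.
Local Open Scope ring_scope.

Section Defs.
Variables (R : realType) (dim : nat).
Local Notation pt := 'rV[R]_dim.

Definition ls_dist (s : R) (x y : pt) : R :=
  (\sum_(k < dim) `|x ord0 k - y ord0 k| `^ s) `^ s^-1.

Definition distP (s : R) (P : {fset pt}) (x : pt) : R :=
  inf [set ls_dist s x p | p in [set p | (p \in P)%fset /\ p != x]].

Definition ballN (s : R) (Q : set pt) (x : pt) (r : R) : set pt :=
  [set p | Q p /\ p != x /\ ls_dist s x p <= r].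

Definition RNN (s : R) (P : {fset pt}) (x : pt) : set pt :=
  [set p | (p \in P)%fset /\ p != x /\ ls_dist s p x <= distP s P p].

Definition bucket (s eps : R) (P : {fset pt}) (i : int) : set pt :=
  [set p | (p \in P)%fset /\
     (1 + eps) ^ (i - 1) <= distP s P p /\ distP s P p < (1 + eps) ^ i].

Definition logb (b x : R) : R := ln x / ln b.

Definition idx_lo (s eps : R) (q y : pt) : int :=
  (Num.floor (logb (1 + eps) (ls_dist s q y / (1 + eps))) + 1)%R.
Definition idx_hi (s eps : R) (q y : pt) : int :=
  Num.ceil (logb (1 + eps) (ls_dist s q y / eps)).

Definition in_range (s eps : R) (q y : pt) (i : int) : Prop :=
  (idx_lo s eps q y <= i)%R /\ (i <= idx_hi s eps q y)%R.

Definition Pprime (s eps : R) (P : {fset pt}) (q y : pt) : set pt :=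
  [set p | exists i, in_range s eps q y i /\ bucket s eps P i p].

(* S' = union of the outputs of the PLEB queries on nonempty buckets in range *)
Definition Sprime (s eps : R) (P : {fset pt}) (q y : pt)
    (out : int -> set pt) : set pt :=
  [set p | exists i, in_range s eps q y i /\ bucket s eps P i !=set0 /\ out i p].

End Defs.

(* Main.v *)
Require Import Defs.
From HB Require Import structures.
From mathcomp Require Import all_boot all_order all_algebra.
From mathcomp Require Import all_classical all_reals all_analysis.
From mathcomp Require Import finmap.
From mathcomp Require Import lra.
Import Order.TTheory GRing.Theory Num.Theory.
Local Open Scope classical_set_scope.
Local Open Scope ring_scope.

Section Helpers.
Variables (dT : measure_display) (Omega : measurableType dT) (R : realType)
  (Pr : probability Omega R).

Lemma union_bound (T : eqType) (G : T -> set Omega) (c : R) (s : seq T) :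
  (forall p, measurable (G p)) ->
  (forall p, (Pr (~` G p) <= c%:E)%E) ->
  measurable [set w | forall p, p \in s -> G p w] /\
  (Pr (~` [set w | forall p, p \in s -> G p w]) <= ((size s)%:R * c)%:E)%E.
Proof.
move=> Gm Gc; elim: s => [|a s [IHm IHc]].
  have -> : [set w | forall p, p \in [::] -> G p w] = setT.
    by apply/seteqP; split => w //= _ p; rewrite in_nil.
  by rewrite setCT measure0 mul0r; split.
have -> : [set w | forall p, p \in a :: s -> G p w] =
   G a `&` [set w | forall p, p \in s -> G p w].
  apply/seteqP; split => w /=.
    by move=> H; split => [|p ps]; apply: H; rewrite inE ?eqxx ?ps ?orbT.
  by move=> [Ga H] p; rewrite inE => /orP[/eqP->//|/H].
split; first exact: measurableI.
rewrite setCI (le_trans (measureU2 _ _ _)) //; [exact: measurableC..|].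
by rewrite /= -nat1r mulrDl mul1r EFinD leeD.
Qed.
End Helpers.

Theorem lemma6 (R : realType) (dim : nat) (s eps : R)
  (P : {fset 'rV[R]_dim}) (n : nat) (q : 'rV[R]_dim)
  (dT : measure_display) (Omega : measurableType dT) (Pr : probability Omega R)
  (y : Omega -> 'rV[R]_dim)
  (out : int -> Omega -> set 'rV[R]_dim) :
  0 < s -> s <= 2 -> 0 < eps ->
  #|` P| = n -> (2 <= n)%N ->
  (forall w, (y w \in P)%fset) ->
  (forall i : int, bucket s eps P i !=set0 ->
     exists A, [/\ measurable A,
       A `<=` [set w | out i w = ballN s (bucket s eps P i) q ((1 + eps) ^ i)] &
       ((1 - (n%:R ^+ 2)^-1)%:E <= Pr A)%E]) ->
  exists A, [/\ measurable A,
    A `<=` [set w | RNN s P q `&` Pprime s eps P q (y w)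
                     `<=` Sprime s eps P q (y w) (fun i => out i w)] &
    ((1 - n%:R^-1)%:E <= Pr A)%E].
Proof.
move=> s0 s2 e0 Pn n2 yP HA.
pose g (i : int) : set Omega :=
  match pselect (bucket s eps P i !=set0) with
  | left h => projT1 (cid (HA i h))
  | right _ => setT end.
have gP i : bucket s eps P i !=set0 ->
  [/\ measurable (g i),
       g i `<=` [set w | out i w = ballN s (bucket s eps P i) q ((1 + eps) ^ i)] &
       ((1 - (n%:R ^+ 2)^-1)%:E <= Pr (g i))%E].
  by move=> h; rewrite /g; case: pselect => // h'; case: cid.
have gm i : measurable (g i).
  by rewrite /g; case: pselect => // h; case: cid => ? [].
have n0 : (0 < n%:R :> R) by rewrite ltr0n; case: n n2 {Pn HA g gP gm}.
have gc i : (Pr (~` g i) <= ((n%:R ^+ 2)^-1)%:E)%E.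
  rewrite probability_setC //.
  case: (pselect (bucket s eps P i !=set0)) => h; last first.
    rewrite /g; case: pselect => // _.
    by rewrite probability_setT subee // lee_fin invr_ge0 exprn_ge0 // ltW.
  have [_ _ hb] := gP i h.
  have f : Pr (g i) \is a fin_num by rewrite ge0_fin_numE ?(le_lt_trans (probability_le1 _ _)) ?ltry.
  move: hb; rewrite -(fineK f) -EFinB !lee_fin; lra.
pose idx (p : 'rV[R]_dim) : int :=
  match pselect (exists i, bucket s eps P i p) with
  | left h => projT1 (cid h)
  | right _ => 0 end.
have buniq i j p : bucket s eps P i p -> bucket s eps P j p -> i = j.
  have b1 : 1 <= 1 + eps by rewrite lerDl ltW.
  have key a b : bucket s eps P a p -> bucket s eps P b p -> (a <= b)%R.
    move=> [_ [la _]] [_ [_ ub]].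
    rewrite leNgt; apply/negP => ba.
    have : (1 + eps) ^ b <= (1 + eps) ^ (a - 1).
      apply: ler_weXz2l => //; by rewrite -ltzD1 subrK.
    move=> h; have := le_lt_trans (le_trans h la) ub; by rewrite ltxx.
  by move=> hi hj; apply/eqP; rewrite eq_le !(key _ _ _ _).
have idxP i p : bucket s eps P i p -> idx p = i.
  move=> h; rewrite /idx; case: pselect => [h'|]; last by move=> /(_ (ex_intro _ i h)).
  by case: cid => j hj /=; apply: (buniq _ _ p hj h).
have [Am Ac] := @union_bound _ _ _ Pr _ (fun p => g (idx p)) _ (P : seq _) (fun p => gm _) (fun p => gc _).
exists [set w | forall p, p \in (P : seq _) -> g (idx p) w]; split => //.
- move=> w /= Hw p [[pP [pq dp]] [i [ir bi]]].
  exists i; split => //; split; first by exists p.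
  have [_ sub _] := gP i (ex_intro _ p bi).
  rewrite (sub w); last by rewrite -(idxP _ _ bi); apply: Hw.
  split => //; split => //.
  have -> : ls_dist s q p = ls_dist s p q.
    by rewrite /ls_dist; congr (_ `^ _); apply: eq_bigr => k _; rewrite distrC.
  by case: bi => _ [_ /ltW]; apply: le_trans.
- rewrite probability_setC // in Ac.
  have f : Pr [set w | forall p, p \in (P : seq _) -> g (idx p) w] \is a fin_num.
    by rewrite ge0_fin_numE ?(le_lt_trans (probability_le1 _ _)) ?ltry.
  move: Ac; rewrite -(fineK f) -EFinB !lee_fin.
  have -> : size (P : seq _) = n by rewrite -Pn.
  have -> : n%:R * (n%:R ^+ 2)^-1 = (n%:R : R)^-1.
    by rewrite expr2 invfM mulrA divff ?mul1r // gt_eqF.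
  set x := fine _; set t := (n%:R : R)^-1; move=> H.
  by rewrite lerBlDr addrC -lerBlDr.
Qed.
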